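(* Consider a fixed user set, i.e. every user receives a recommendation list in every round, so $\delta_i^t = 1$ for all users $u_i \in U$ and all rounds $t = 0,1,\dots,T$, and let the round-$t$ lists $l_i^t$ be those produced by the strategy F-FAST. Assume that for every service $s_j$ with $U_j \neq \emptyset$ the overall appearance probability satisfies $p_j^T > 0$ (so that all quantities below are well defined). Then the sum of the Top-$N$ Fairness values of all users is zero: $$\sum_{u_i \in U} F_i^T = 0 .$$
   Context: Services $S=\{s_1,\dots,s_m\}$ with capacity constraints $c_1,\dots,c_m$ (nonnegative integers: the maximum number of users to whom $s_j$ may be recommended in one round); users $U=\{u_1,\dots,u_n\}$. Each user $u_i$ has a fixed original ranked recommendation list $l_i$ (produced from a predicted rating matrix $R=(r_{i,j})$), and $l(N)_i$ denotes the sub-list of its top $N$ services. For each service $s_j$, $U_j=\{u_i : s_j \in l(N)_i\}$. In round $t$ the system outputs a list $l_i^t$ to user $u_i$; $\delta_i^t\in\{0,1\}$ indicates whether $u_i$ uses the system in round $t$. $In\_tn(s_j,list,N)$ equals $1$ if $s_j$ is in the top-$N$ sub-list of $list$ and $0$ otherwise. Overall appearance probability: $p_j^T = \dfrac{\sum_{u_i\in U_j}\sum_{t=0}^T \delta_i^t\, In\_tn(s_j,l_i^t,N)}{\sum_{u_i\in U_j}\sum_{t=0}^T \delta_i^t}$. Actual appearance probability: $p_{i,j}^T = \dfrac{\sum_{t=0}^T \delta_i^t\, In\_tn(s_j,l_i^t,N)}{\sum_{t=0}^T \delta_i^t}$. Service fairness degree: $F_{i,j}^T = \dfrac{p_{i,j}^T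 - p_j^T}{p_j^T}$. Top-$N$ Fairness: $F_i^T = \sum_{s_j \in l(N)_i} F_{i,j}^T$. F-FAST (one round $T$): start with empty lists and remaining capacities $c_j$. Repeatedly pick the user with the lowest current Top-$N$ Fairness value; go through that user's $l(N)_i$ in rank order and insert into $l_i^T$ the first service $s_j$ with remaining capacity $c_j>0$ (not yet attempted for this user), decrement $c_j$, and update that user's Top-$N$ Fairness value (accounting for the assignment); then re-sort users by their Top-$N$ Fairness and repeat. The round ends when every service in every user's $l(N)_i$ has been attempted or all capacities are exhausted; finally the remaining positions of each $l_i^T$ are filled with the services at positions larger than $N$ in $l_i$, in order. *)

(* Defs.v *)
From HB Require Import structures.
From mathcomp Require Import all_boot all_order all_algebra.
Set Implicit Arguments. Unset Strict Implicit. Unset Printing Implicit Defensive.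
Import Order.TTheory GRing.Theory Num.Theory.
Local Open Scope ring_scope.

(* Users are 'I_n, services are 'I_m.
   l i        : the original ranked list of user u_i (a seq of services);
   topN N s   : the sub-list of the first N entries of a list s  (l(N)_i = topN N (l i));
   L t i      : the list l_i^t output to user u_i in round t;
   d t i      : delta_i^t (whether u_i uses the system in round t). *)

Section Fairness.
Variables (R : realFieldType) (n m N : nat).
Variables (l : 'I_n -> seq 'I_m) (d : nat -> 'I_n -> bool)
          (L : nat -> 'I_n -> seq 'I_m) (T : nat).

Definition topN (s : seq 'I_m) : seq 'I_m := take N s.

Definition In_tn (j : 'I_m) (s : seq 'I_m) : bool := j \in topN s.

Definition inU (j : 'I_m) (i : 'I_n) : bool := j \in topN (l i).

Definition overall_prob (j : 'I_m) : R :=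
  (\sum_(i < n | inU j i) \sum_(t < T.+1) ((d t i && In_tn j (L t i)) : nat)%:R)
  / (\sum_(i < n | inU j i) \sum_(t < T.+1) ((d t i) : nat)%:R).

Definition actual_prob (i : 'I_n) (j : 'I_m) : R :=
  (\sum_(t < T.+1) ((d t i && In_tn j (L t i)) : nat)%:R)
  / (\sum_(t < T.+1) ((d t i) : nat)%:R).

Definition fairness_degree (i : 'I_n) (j : 'I_m) : R :=
  (actual_prob i j - overall_prob j) / overall_prob j.

Definition topN_fairness (i : 'I_n) : R :=
  \sum_(j <- topN (l i)) fairness_degree i j.

End Fairness.

(* The F-FAST strategy for one round T, as a (nondeterministic) process. *)

Section FFAST.
Variables (R : realFieldType) (n m N : nat).
Variables (l : 'I_n -> seq 'I_m) (c : 'I_m -> nat) (d : nat -> 'I_n -> bool)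
          (L : nat -> 'I_n -> seq 'I_m) (T : nat).

(* state: (services assigned so far to each user (in insertion order),
           services of l(N)_i already attempted for each user,
           remaining capacities) *)
Definition fstate : Type :=
  (('I_n -> seq 'I_m) * ('I_n -> seq 'I_m) * ('I_m -> nat))%type.

Definition asg (st : fstate) := st.1.1.
Definition att (st : fstate) := st.1.2.
Definition cap (st : fstate) := st.2.

Definition finit : fstate := (fun _ => [::], fun _ => [::], c).

Definition pending (st : fstate) (i : 'I_n) : seq 'I_m :=
  [seq j <- topN N (l i) | j \notin att st i].

Definition cur_fairness (st : fstate) (i : 'I_n) : R :=
  topN_fairness R N l d (fun t => if t == T then asg st else L t) T i.

(* one insertion step for user i: go through l(N)_i in rank order over the
   services not yet attempted; the first one with remaining capacity, s_j, is
   appended to the user's list and c_j is decremented; the services passed over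
   (capacity 0) and s_j become attempted. *)
Definition fupdate (st : fstate) (i : 'I_n) : fstate :=
  let p := pending st i in
  let k := find (fun j => 0 < cap st j)%N p in
  match drop k p with
  | j :: _ =>
      (fun x => if x == i then rcons (asg st x) j else asg st x,
       fun x => if x == i then att st x ++ take k.+1 p else att st x,
       fun y => if y == j then (cap st y).-1 else cap st y)
  | [::] =>
      (asg st,
       fun x => if x == i then att st x ++ p else att st x,
       cap st)
  end.

Definition fterminal (st : fstate) : Prop :=
  (forall i, pending st i = [::]) \/ (forall j, cap st j = 0%N).

(* a step: pick a user with lowest current Top-N Fairness (among users that
   still have services to attempt; ties broken arbitrarily) *)
Definition fstep (st st' : fstate) : Prop :=
  ~ fterminal st /\
  exists i, pending st i != [::] /\
    (forall i', pending st i' != [::] -> cur_fairness st i <= cur_fairness st i') /\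
    st' = fupdate st i.

Inductive freach : fstate -> Prop :=
| freach_init : freach finit
| freach_step st st' : freach st -> fstep st st' -> freach st'.

Definition ffast_round : Prop :=
  exists st, freach st /\ fterminal st /\
    forall i, L T i = asg st i ++ drop N (l i).

End FFAST.

(* Main.v *)
Require Import Defs.
From HB Require Import structures.
From mathcomp Require Import all_boot all_order all_algebra.
From mathcomp Require Import ring lra.
Import Order.TTheory GRing.Theory Num.Theory.
Local Open Scope ring_scope.

Theorem theorem1 (R : realFieldType) (n m N : nat)
  (l : 'I_n -> seq 'I_m) (c : 'I_m -> nat) (d : nat -> 'I_n -> bool)
  (L : nat -> 'I_n -> seq 'I_m) (T : nat) :
  (forall i, uniq (l i)) ->
  (forall t i, d t i = true) ->
  (forall t, (t <= T)%N -> ffast_round R N l c d L t) ->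
  (forall j : 'I_m, [exists i, inU N l j i] -> 0 < overall_prob R N l d L T j) ->
  \sum_(i < n) topN_fairness R N l d L T i = 0.
Proof.
move=> Hu Hd _ Hp.
have HD : forall i : 'I_n, \sum_(t < T.+1) ((d t i : nat)%:R : R) = (T.+1)%:R.
  move=> i; under eq_bigr => t _ do rewrite Hd.
  by rewrite sumr_const card_ord.
rewrite /topN_fairness.
under eq_bigr => i _ do rewrite (big_uniq _ (take_uniq N (Hu i))) /=.
rewrite (eq_bigr (fun i => \sum_(j : 'I_m) if inU N l j i then
   fairness_degree R N l d L T i j else 0)); last first.
  by move=> i _; rewrite big_mkcond.
rewrite exchange_big /= big1 // => j _.
rewrite -big_mkcond /=.
case: (boolP [exists i, inU N l j i]) => [Hex|Hno]; last first.
  rewrite big_pred0 // => i; apply/negP => Hi; move/negP: Hno; apply.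
  by apply/existsP; exists i.
have Hpj := Hp j Hex.
rewrite /fairness_degree -mulr_suml sumrB.
set p := overall_prob R N l d L T j.
rewrite sumr_const.
have -> : \sum_(i < n | inU N l j i) actual_prob R N d L T i j = p *+ #|[pred i | inU N l j i]|.
  rewrite /p /overall_prob.
  under eq_bigr => i _ do rewrite /actual_prob HD.
  under [X in _ / X]eq_bigr => i _ do rewrite HD.
  rewrite -mulr_suml sumr_const.
  have Hk : (0 < #|[pred i | inU N l j i]|)%N.
    by case/existsP: Hex => i Hi; apply/card_gt0P; exists i.
  move: Hk; set k := #|_| => Hk.
  set S := \sum_(i | _) _.
  have Hk' : (k%:R : R) != 0 by rewrite pnatr_eq0 -lt0n.
  have HT : ((T.+1)%:R : R) != 0 by rewrite pnatr_eq0.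
  rewrite -[(T.+1)%:R *+ k]mulr_natr -[_ *+ k]mulr_natr.
  rewrite invfM mulrA mulfVK //.
apply/eqP; rewrite mulf_eq0 subr_eq0; apply/orP; left; apply/eqP.
by congr (_ *+ _); apply: eq_card.
Qed.
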